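(* Let $\mu\in(0,1)$ and let $\beta:[0,\infty)\to(0,\infty)$ be positive, bounded, non-increasing with $\lim_{a\to\infty}a\beta(a)=\mu$, and suppose $\beta(a)=\frac{\mu}{1+a}+g(a)$ where $g\in L^1(0,\infty)$ and there exist $K_0,\alpha>0$ with $\int_a^\infty|g(s)|ds\le K_0(1+a)^{-\alpha}$ for all $a\ge0$. Let $B(a)=\int_0^a\beta$ and $W(\tau,b)=C(\tau)e^{-B(e^{\tau}b)}(1-b)^{\mu-1}$ on $[0,1)$ with $C(\tau)>0$ such that $\int_0^1W(\tau,b)db=1$. Then there exists $M>0$ such that for all $\tau\ge0$, $$\left|\mu\int_0^1\left[\frac{e^{\tau}b}{1+e^{\tau}b}-1\right]W(\tau,b)\,db\right|\le Me^{-(1-\mu)\tau}.$$ *)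

(* Defs.v *)
From HB Require Import structures.
From mathcomp Require Import all_boot all_order all_algebra.
From mathcomp Require Import all_classical all_reals all_analysis.
Set Implicit Arguments. Unset Strict Implicit. Unset Printing Implicit Defensive.
Import Order.TTheory GRing.Theory Num.Theory.
Import numFieldNormedType.Exports.
Local Open Scope classical_set_scope.
Local Open Scope ring_scope.

Definition Bfun {R : realType} (beta : R -> R) (a : R) : R :=
  Rintegral lebesgue_measure `[0, a] beta.

Definition Wfun {R : realType} (mu : R) (beta : R -> R) (C : R -> R)
    (tau b : R) : R :=
  C tau * expR (- Bfun beta (expR tau * b)) * (1 - b) `^ (mu - 1).

(* Main.v *)
From HB Require Import structures.
From mathcomp Require Import all_boot all_order all_algebra.
From mathcomp Require Import all_classical all_reals all_analysis.
Require Import Defs.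
From mathcomp Require Import ring lra.
Import Order.TTheory GRing.Theory Num.Theory.
Import numFieldNormedType.Exports.
Local Open Scope classical_set_scope.
Local Open Scope ring_scope.

Section H.
Variable R : realType.
Notation mu := (@lebesgue_measure R).

Lemma ftc_helper (f F : R -> R) (a b : R) : a < b ->
  (forall x, x \in `[a, b] -> derivable f x 1) ->
  (forall x, x \in `[a, b] -> is_derive x 1 F (f x)) ->
  (\int[mu]_(x in `[a, b]) (f x)%:E = (F b)%:E - (F a)%:E)%E.
Proof.
move=> ab df dF.
apply: continuous_FTC2 => //.
- exact: derivable_within_continuous.
- have cF : forall x, x \in `[a, b] -> {for x, continuous F}.
    move=> x /dF [dFx _]; apply: differentiable_continuous.
    exact/derivable1_diffP.
  split.
  + move=> x xab; have [] := dF x; last by [].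
    by apply: subset_itv_oo_cc.
  + apply: cvg_at_right_filter; apply: cF.
    by rewrite in_itv /= lexx (ltW ab).
  + apply: cvg_at_left_filter; apply: cF.
    by rewrite in_itv /= lexx (ltW ab).
- move=> x xab; rewrite derive1E; apply: derive_val.
  by apply: dF; apply: subset_itv_oo_cc.
Qed.

Lemma is_deriveZR (m y d : R) (f : R -> R) : is_derive y 1 f d ->
  is_derive y 1 (fun a : R => m * f a) (m * d).
Proof. move=> h; exact: (@is_deriveZ R R^o R^o f m y 1 d h). Qed.

Lemma is_derive_1p (y : R) : is_derive y 1 (fun a : R => 1 + a) 1.
Proof.
have h := @is_deriveD R R^o R^o (cst 1) id y 1 0 1 _ _.
by rewrite add0r in h; exact: h.
Qed.

Lemma der_inv1 (m x : R) : 0 <= x -> derivable (fun a : R => m / (1 + a)) x 1.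
Proof.
move=> x0; apply: derivableM; first exact: derivable_cst.
apply: derivableV; first by rewrite gt_eqF // ltr_pwDl.
apply: derivableD; first exact: derivable_cst.
exact: derivable_id.
Qed.

Lemma int_inv1 (m x : R) : 0 <= x ->
  mu.-integrable `[0, x] (EFin \o (fun a => m / (1 + a))).
Proof.
move=> x0; apply: continuous_compact_integrable; first exact: segment_compact.
apply: derivable_within_continuous => y; rewrite in_itv /= => /andP[y0 _].
exact: der_inv1.
Qed.

Lemma Rint_inv1 (m x : R) : 0 <= x ->
  \int[mu]_(a in `[0, x]) (m / (1 + a)) = m * ln (1 + x).
Proof.
rewrite le_eqVlt => /predU1P[<-|x0].
  by rewrite set_itv1 Rintegral_set1 addr0 ln1 mulr0.
have H1 : forall y, y \in `[0, x] -> derivable (fun a : R => m / (1 + a)) y 1.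
  by move=> y; rewrite in_itv /= => /andP[y0 _]; exact: der_inv1.
have H2 : forall y, y \in `[0, x] ->
    is_derive y 1 (fun a : R => m * ln (1 + a)) (m / (1 + y)).
  move=> y; rewrite in_itv /= => /andP[y0 _].
  have y1 : 0 < 1 + y by rewrite ltr_pwDl.
  have h1 := is_derive_1p y.
  have h2 : is_derive y 1 ((@ln R) \o (fun a : R => 1 + a)) ((1 + y)^-1 * 1).
    exact: (is_derive1_comp (is_derive1_ln y1) h1).
  have h3 := @is_deriveZR m _ _ _ h2.
  by rewrite mulr1 in h3; exact: h3.
have E := @ftc_helper (fun a : R => m / (1 + a)) (fun a : R => m * ln (1 + a)) 0 x x0 H1 H2.
by rewrite /Rintegral E /= addr0 ln1 mulr0 subr0.
Qed.

Lemma int_fin (D : set R) (f : R -> R) : measurable D ->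
  mu.-integrable D (EFin \o f) ->
  (\int[mu]_(s in D) `|f s|%:E)%E \is a fin_num.
Proof.
move=> mD /integrableP[_ h]; rewrite ge0_fin_numE //.
exact: integral_ge0.
Qed.

Lemma KB (m : R) (beta g : R -> R) (x : R) :
  (forall a, 0 <= a -> beta a = m / (1 + a) + g a) ->
  mu.-integrable `[0, +oo[ (EFin \o g) -> 0 <= x ->
  `|Bfun beta x - m * ln (1 + x)| <=
     fine (\int[mu]_(s in `[0%R, +oo[) `|g s|%:E)%E.
Proof.
move=> hg hgL1 x0.
have sub : `[0, x] `<=` `[0, +oo[.
  by apply: subset_itvl; rewrite bnd_simp.
have ig : mu.-integrable `[0, x] (EFin \o g).
  exact: integrableS hgL1.
have -> : Bfun beta x = Rintegral mu `[0, x] (fun a : R => m / (1 + a) + g a).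
  apply: eq_Rintegral => y; rewrite inE /= in_itv /= => /andP[y0 _]; exact: hg.
rewrite RintegralD //; last exact: int_inv1.
rewrite Rint_inv1 // addrC addKr.
apply: (le_trans (le_normr_Rintegral _ _)) => //.
rewrite /Rintegral fine_le //; first exact: int_fin.
  exact: int_fin.
apply: ge0_subset_integral => //=.
apply/measurable_realfun.measurable_EFinP; apply: measurableT_comp => //.
by case/integrableP: hgL1 => /measurable_realfun.measurable_EFinP.
Qed.

Lemma int_beta (m : R) (beta g : R -> R) (y : R) :
  (forall a, 0 <= a -> beta a = m / (1 + a) + g a) ->
  mu.-integrable `[0, +oo[ (EFin \o g) -> 0 <= y ->
  mu.-integrable `[0, y] (EFin \o beta).
Proof.
move=> hg hgL1 y0.
have sub : `[0, y] `<=` `[0, +oo[ by apply: subset_itvl; rewrite bnd_simp.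
have ig : mu.-integrable `[0, y] (EFin \o g) by exact: integrableS hgL1.
have H : mu.-integrable `[0, y]
    ((EFin \o (fun a : R => (m / (1 + a))%R)) \+ (EFin \o g))%E.
  by apply: integrableD => //; exact: int_inv1.

apply: eq_integrable H => // a.
rewrite inE /= in_itv /= => /andP[a0 _].
by rewrite /= hg.
Qed.

Lemma Bfun_nd (m : R) (beta g : R -> R) :
  (forall a, 0 <= a -> 0 < beta a) ->
  (forall a, 0 <= a -> beta a = m / (1 + a) + g a) ->
  mu.-integrable `[0, +oo[ (EFin \o g) ->
  {homo Bfun beta : x y / x <= y}.
Proof.
move=> hpos hg hgL1 x y xy.
have [x0|x0] := ltP x 0.
  rewrite /Bfun set_itv_ge; last by rewrite bnd_simp -ltNge.
  rewrite Rintegral_set0; apply: Rintegral_ge0 => a /=.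
  by rewrite in_itv /= => /andP[a0 _]; exact/ltW/hpos.
have y0 : 0 <= y by exact: le_trans xy.
have iy := @int_beta m beta g y hg hgL1 y0.
have ix := @int_beta m beta g x hg hgL1 x0.
rewrite /Bfun /Rintegral fine_le //; first exact: integrable_fin_num.
  exact: integrable_fin_num.
apply: ge0_subset_integral => //=.
- by case/integrableP: iy.
- by move=> a; rewrite in_itv /= => /andP[a0 _]; rewrite lee_fin; exact/ltW/hpos.
- by apply: subset_itvl; rewrite bnd_simp.
Qed.

Lemma W_meas (m : R) (beta C : R -> R) (tau : R) :
  {homo Bfun beta : x y / x <= y} ->
  measurable_fun (`[0, 1[ : set R) (Wfun m beta C tau).
Proof.
move=> nd.
have hnd : {homo (fun b => Bfun beta (expR tau * b)) : x y / x <= y}.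
  by move=> x y xy; apply: nd; rewrite ler_pM2l // expR_gt0.
apply: measurable_realfun.measurable_funM; last first.
  apply: (measurableT_comp (@measurable_realfun.measurable_powR R (m - 1))).
  by apply: measurable_realfun.measurable_funB.
apply: measurable_realfun.measurable_funM => //.
apply: (measurableT_comp (@measurable_realfun.measurable_expR R)).
apply: measurable_realfun.measurable_funN.
exact: measurable_realfun.nondecreasing_measurable.
Qed.

Lemma is_derive_lin (t y : R) : is_derive y 1 (fun b : R => 1 + t * b) t.
Proof.
have h1 := @is_deriveZR t y 1 id (is_derive_id y 1).
rewrite mulr1 in h1.
have h := @is_deriveD R R^o R^o (cst 1) (fun b => t * id b) y 1 0 t _ h1.
by rewrite add0r in h; exact: h.
Qed.

Lemma is_derive_pow (t p y : R) : 0 < 1 + t * y ->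
  is_derive y 1 (fun b : R => (1 + t * b) `^ p) ((p * (1 + t * y) `^ (p - 1)) * t).
Proof.
move=> hy.
have h := @is_derive1_comp R (fun z : R => z `^ p) (fun b : R => 1 + t * b) y _ _ (is_derive1_powR p hy) (is_derive_lin t y).
exact: h.
Qed.

Lemma int_pow (t p : R) : 0 < t ->
  mu.-integrable `[0, 1] (EFin \o (fun b : R => (1 + t * b) `^ p)).
Proof.
move=> t0; apply: continuous_compact_integrable; first exact: segment_compact.
apply: derivable_within_continuous => y; rewrite in_itv /= => /andP[y0 _].
have hy : 0 < 1 + t * y by rewrite ltr_pwDl // mulr_ge0 // ltW.
by case: (@is_derive_pow t p y hy).
Qed.

Lemma Rint_pow (t m : R) : 0 < t -> 0 < m ->
  \int[mu]_(b in `[0, 1]) ((1 + t * b) `^ (- m - 1)) =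
  (1 - (1 + t) `^ (- m)) / (m * t).
Proof.
move=> t0 m0.
have H1 : forall y : R, y \in `[0, 1] ->
    derivable (fun b : R => (1 + t * b) `^ (- m - 1)) y 1.
  move=> y; rewrite in_itv /= => /andP[y0 _].
  have hy : 0 < 1 + t * y by rewrite ltr_pwDl // mulr_ge0 // ltW.
  by case: (@is_derive_pow t (- m - 1) y hy).
have H2 : forall y : R, y \in `[0, 1] ->
    is_derive y 1 (fun b : R => (- (m * t)^-1) * (1 + t * b) `^ (- m))
       ((1 + t * y) `^ (- m - 1)).
  move=> y; rewrite in_itv /= => /andP[y0 _].
  have hy : 0 < 1 + t * y by rewrite ltr_pwDl // mulr_ge0 // ltW.
  have h := @is_deriveZR (- (m * t)^-1) _ _ _ (@is_derive_pow t (- m) y hy).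
  suff -> : (1 + t * y) `^ (- m - 1) =
     - (m * t)^-1 * (- m * (1 + t * y) `^ (- m - 1) * t) by exact: h.
  field.
  by rewrite !gt_eqF.
have E := @ftc_helper _ _ 0 1 ltr01 H1 H2.
rewrite /Rintegral E /= mulr0 addr0 mulr1 powR1.
field.
by rewrite !gt_eqF.
Qed.

Lemma powRE (x p : R) : 0 < x -> x `^ p = expR (p * ln x).
Proof. by move=> x0; rewrite /powR gt_eqF. Qed.

Lemma low1 (m G Bv x y b : R) : 0 < m -> m < 1 -> 0 <= x -> x <= y ->
  0 <= b -> b < 1 -> `|Bv - m * ln (1 + x)| <= G ->
  expR (- G) * (1 + y) `^ (- m) <= expR (- Bv) * (1 - b) `^ (m - 1).
Proof.
move=> m0 m1 x0 xy b0 b1 hB.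
have y0 : 0 <= y by exact: le_trans xy.
rewrite !powRE ?subr_gt0 ?ltr_pwDl // -!expRD ler_expR.
have l1 : ln (1 + x) <= ln (1 + y).
  by rewrite ler_ln ?posrE ?ltr_pwDl // lerD2l.
have l2 : ln (1 - b) <= 0 by apply: ln_le0; rewrite lerBlDr lerDl.
move: hB; rewrite ler_norml => /andP[h1 h2].
nra.
Qed.

Lemma up1 (m G Bv x b : R) : 0 < m -> m < 1 -> 0 <= x ->
  0 <= b -> b <= 2^-1 -> `|Bv - m * ln (1 + x)| <= G ->
  expR (- Bv) * (1 - b) `^ (m - 1) * (1 + x)^-1 <=
  2 * expR G * (1 + x) `^ (- m - 1).
Proof.
move=> m0 m1 x0 b0 b1 hB.
have x1 : 0 < 1 + x by rewrite ltr_pwDl.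
have b2 : 0 < 1 - b by rewrite subr_gt0 (le_lt_trans b1) // invf_lt1 // ltr1n.
have e1 : (1 + x)^-1 = expR (- ln (1 + x)) by rewrite expRN lnK ?posrE.
have e2 : (2 : R) = expR (ln 2) by rewrite lnK ?posrE.
rewrite !powRE // e1 [X in _ <= X * _ * _]e2 -!expRD ler_expR.
have l2 : ln (2^-1 : R) <= ln (1 - b).
  rewrite ler_ln ?posrE ?invr_gt0 //.
  by rewrite lerBrDl -lerBrDr; move: b1; rewrite (_ : 1 - 2^-1 = 2^-1 :> R) //; field.
have l3 : ln (2^-1 : R) = - ln 2 by rewrite lnV ?posrE.
have l4 : 0 <= ln (2 : R) by rewrite ln_ge0 // ler1n.
move: hB; rewrite ler_norml => /andP[h1 h2].
nra.
Qed.

Lemma fin_arith (m G C tau Rp X : R) : 0 < m -> m < 1 -> 0 <= tau -> 0 <= G ->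
  0 < C ->
  C * (expR (- G) * (1 + expR tau) `^ (- m)) <= 1 ->
  0 <= Rp -> Rp <= (1 - (1 + expR tau) `^ (- m)) / (m * expR tau) ->
  X <= 2 * C * expR G * Rp + 2 / expR tau ->
  m * X <= (4 * (expR G * expR G) + 2) * expR (- ((1 - m) * tau)).
Proof.
move=> m0 m1 tau0 G0 C0 hC Rp0 hRp hX.
set t := expR tau in hC hRp hX *; set u := expR (- ((1 - m) * tau)).
set E := expR G in hX *; set P := (1 + t) `^ (- m) in hC hRp *.
have t0 : 0 < t by rewrite expR_gt0.
have t1 : 1 <= t by rewrite -expR0 ler_expR.
have u0 : 0 < u by rewrite expR_gt0.
have E0 : 0 < E by rewrite expR_gt0.
have P0 : 0 < P by rewrite powR_gt0 // ltr_pwDl // ltW.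
have EEi : expR (- G) * E = 1 by rewrite -expRD addNr expR0.
have ut : 1 <= u * t.
  by rewrite /u /t -expRD -[X in X <= _]expR0 ler_expR; nra.
have Put : 1 <= 2 * (P * (u * t)).
  have e2 : (2 : R) = expR (ln 2) by rewrite lnK ?posrE.
  have P1 : 0 < 1 + t by rewrite ltr_pwDl // ltW.
  rewrite e2 /P powRE // /u /t.
  rewrite -(expRD (- ((1 - m) * tau)) tau) -expRD -expRD -[X in X <= _]expR0 ler_expR.
  have l1 : ln (1 + expR tau) <= ln 2 + tau.
    rewrite -[X in _ <= _ + X](expRK tau) -lnM ?posrE ?expR_gt0 //.
    rewrite ler_ln ?posrE ?ltr_pwDl ?mulr_gt0 ?expR_gt0 //; move: t1; rewrite /t; lra.
  have l2 : tau <= ln (1 + expR tau).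
    rewrite -[X in X <= _](expRK tau) ler_ln ?posrE ?ltr_pwDl ?expR_gt0 //.
    by rewrite lerDr.
  nra.
have f1 : m * Rp * t <= 1.
  have mt : 0 < m * t by rewrite mulr_gt0.
  move: hRp; rewrite ler_pdivlMr // => h; nra.
have f2 : C * P <= E.
  have : C * P * (expR (- G) * E) <= E by nra.
  by rewrite EEi mulr1.
have g1 : C * m * Rp <= 2 * E * u.
  have h1 : C * m * Rp <= C * m * Rp * (2 * (P * (u * t))).
    have cmr : 0 <= C * m * Rp by rewrite mulr_ge0 // mulr_ge0 // ltW.
    by have := ler_wpM2l cmr Put; rewrite mulr1.
  apply: (le_trans h1).
  have -> : C * m * Rp * (2 * (P * (u * t))) = 2 * u * ((C * P) * (m * Rp * t)).
    by ring.
  rewrite [X in _ <= X](_ : _ = 2 * u * (E * 1)); last by ring.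
  apply: ler_wpM2l; first by rewrite mulr_ge0 // ltW.
  apply: ler_pM.
  - by rewrite mulr_ge0 // ltW.
  - by rewrite !mulr_ge0 // ltW.
  - exact: f2.
  - exact: f1.
have g2 : m * (2 / t) <= 2 * u.
  rewrite mulrA ler_pdivrMr //; nra.
have : m * X <= 2 * E * (C * m * Rp) + m * (2 / t).
  rewrite (_ : 2 * E * (C * m * Rp) = m * (2 * C * E * Rp)); last by ring.
  by rewrite -mulrDr ler_wpM2l // ltW.
nra.
Qed.
End H.

Lemma inv_le2 (R : realType) (a c : R) : 0 < a -> 0 < c -> c <= 2 * a -> a^-1 <= 2 / c.
Proof.
move=> a0 c0 ca.
rewrite -[X in X <= _]mul1r ler_pdivrMr // mulrAC ler_pdivlMr //; lra.
Qed.

Lemma intZ (R : realType) (i : interval R) (k : R) (f : R -> R) :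
  lebesgue_measure.-integrable [set` i] (EFin \o f) ->
  lebesgue_measure.-integrable [set` i] (EFin \o (fun x => k * f x)).
Proof.
move=> h.
have h2 : lebesgue_measure.-integrable [set` i] (fun x => k%:E * (EFin \o f) x)%E.
  exact: integrableZl.
by apply: eq_integrable h2 => // x _; rewrite /= EFinM.
Qed.

Theorem lemma8 (R : realType) (mu : R) (beta g : R -> R) (K0 alpha : R)
  (C : R -> R)
  (hmu0 : 0 < mu) (hmu1 : mu < 1)
  (hpos : forall a, 0 <= a -> 0 < beta a)
  (hbdd : exists Mb : R, forall a, 0 <= a -> beta a <= Mb)
  (hdec : forall a b, 0 <= a -> a <= b -> beta b <= beta a)
  (hlim : (fun a => a * beta a) x @[x --> +oo] --> mu)
  (hg : forall a, 0 <= a -> beta a = mu / (1 + a) + g a)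
  (hgL1 : lebesgue_measure.-integrable `[0, +oo[ (EFin \o g))
  (hK0 : 0 < K0) (halpha : 0 < alpha)
  (hgtail : forall a, 0 <= a ->
     (\int[lebesgue_measure]_(s in `[a, +oo[) `|g s|%:E <=
        (K0 * (1 + a) `^ (- alpha))%:E)%E)
  (hCpos : forall tau, 0 <= tau -> 0 < C tau)
  (hCnorm : forall tau, 0 <= tau ->
     Rintegral lebesgue_measure `[0, 1[ (Wfun mu beta C tau) = 1) :
  exists M : R, 0 < M /\ forall tau, 0 <= tau ->
    `| mu * Rintegral lebesgue_measure `[0, 1[
          (fun b => (expR tau * b / (1 + expR tau * b) - 1)
                     * Wfun mu beta C tau b) |
      <= M * expR (- ((1 - mu) * tau)).
Proof.
set G := fine (\int[lebesgue_measure]_(s in `[0%R, +oo[) `|g s|%:E)%E.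
have G0 : 0 <= G by rewrite /G fine_ge0 // integral_ge0.
have KBx : forall x, 0 <= x -> `|Bfun beta x - mu * ln (1 + x)| <= G.
  by move=> x hx; exact: KB.
have nd := @Bfun_nd R mu beta g hpos hg hgL1.
exists (4 * (expR G * expR G) + 2); split.
  by rewrite addr_gt0 // mulr_gt0 // mulr_gt0 // expR_gt0.
move=> tau tau0.
have hn := hCnorm tau tau0.
have Cp := hCpos tau tau0.
set t := expR tau.
have t0 : 0 < t by rewrite expR_gt0.
have t1 : 1 <= t by rewrite -expR0 ler_expR.
set W := Wfun mu beta C tau in hn *.
have mW : measurable_fun (`[0, 1[ : set R) W := @W_meas R mu beta C tau nd.
have W0 : forall b, 0 <= W b.
  move=> b; rewrite /W /Wfun mulr_ge0 ?powR_ge0 // mulr_ge0 ?(ltW Cp) //.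
have iW : lebesgue_measure.-integrable `[0, 1[ (EFin \o W).
  apply/integrableP; split; first exact/measurable_realfun.measurable_EFinP.
  have -> : (\int[lebesgue_measure]_(x in `[0%R, 1%R[) `|(EFin \o W) x|
     = \int[lebesgue_measure]_(x in `[0%R, 1%R[) (W x)%:E)%E.
    by apply: eq_integral => x _; rewrite /= ger0_norm.
  have I0 : (0 <= \int[lebesgue_measure]_(x in `[0%R, 1%R[) (W x)%:E)%E.
    by apply: integral_ge0 => x _; rewrite lee_fin.
  move: hn I0; rewrite /Rintegral.
  case: (\int[lebesgue_measure]_(x in `[0%R, 1%R[) (W x)%:E)%E => [r _ _|/= h _|//].
    exact: ltry.
  by exfalso; move/eqP: h; rewrite eq_sym oner_eq0.
set Wp := fun b => W b * (1 + t * b)^-1.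
have mphi : measurable_fun (`[0, 1[ : set R) (fun b => (1 + t * b)^-1).
  have m1 : measurable_fun (`[0, 1[ : set R) (fun b => (1 + t * b) `^ (-1)).
    apply: (measurableT_comp (@measurable_realfun.measurable_powR R (-1))).
    exact: (@measurable_realfun.measurable_funD _ _ R _ (cst 1) ( *%R t) _
      (measurable_realfun.mulrl_measurable t)).
  apply: eq_measurable_fun m1 => b; rewrite inE /= in_itv /= => /andP[b0 _].
  by rewrite powR_inv1 // addr_ge0 // mulr_ge0 // ltW.
have mWp : measurable_fun (`[0, 1[ : set R) Wp.
  exact: measurable_realfun.measurable_funM.
have phi1 : forall b, 0 <= b -> 0 < 1 + t * b /\ (1 + t * b)^-1 <= 1.
  move=> b b0; have h : 1 <= 1 + t * b by rewrite lerDl mulr_ge0 // ltW.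
  by split; [lra | rewrite invf_le1 // (lt_le_trans ltr01)].
have Wp0 : forall b, 0 <= b -> 0 <= Wp b.
  move=> b b0; rewrite /Wp mulr_ge0 // invr_ge0; have [h _] := phi1 b b0; lra.
have iWp : lebesgue_measure.-integrable `[0, 1[ (EFin \o Wp).
  apply: le_integrable iW => //.
    exact/measurable_realfun.measurable_EFinP.
  move=> b; rewrite /= in_itv /= => /andP[b0 _].
  rewrite lee_fin ger0_norm ?Wp0 // ger0_norm // /Wp.
  have [_ h] := phi1 b b0.
  by rewrite -[X in _ <= X]mulr1 ler_wpM2l.
set I := fun b => (t * b / (1 + t * b) - 1) * W b.
have IE : forall b, 0 <= b -> I b = - Wp b.
  move=> b b0; have [h _] := phi1 b b0.
  rewrite /I /Wp; field; lra.
have iI : lebesgue_measure.-integrable `[0, 1[ (EFin \o I).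
  have h := integrableN iWp.
  apply: eq_integrable h => // b; rewrite inE /= in_itv /= => /andP[b0 _].
  by rewrite IE.
have sub01 : (`[0%R, 1%R[ : set R) `<=` `[0%R, 1%R].
  by apply: subset_itvl; rewrite bnd_simp.
have hC : C tau * (expR (- G) * (1 + t) `^ (- mu)) <= 1.
  set c := C tau * (expR (- G) * (1 + t) `^ (- mu)).
  have icst : lebesgue_measure.-integrable `[0%R, 1%R[ (EFin \o cst c).
    apply: (@integrableS _ _ _ lebesgue_measure `[0%R, 1%R]) => //.
    apply: continuous_compact_integrable; first exact: segment_compact.
    by apply: continuous_subspaceT; exact: cst_continuous.
  rewrite -hn.
  have := @le_Rintegral _ _ _ lebesgue_measure `[0%R, 1%R[ (cst c) W _ icst iW.
  rewrite Rintegral_cst //.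
  move=> H; have {}H : (forall x, `[0%R, 1%R[%classic x -> cst c x <= W x) ->
     c * fine (lebesgue_measure (`[0%R, 1%R[ : set R)) <= Rintegral lebesgue_measure `[0%R, 1%R[ W.
    by apply: H.
  rewrite lebesgue_measure_itv /= lte01 /= subr0 mulr1 in H.
  apply: H => b; rewrite /= in_itv /= => /andP[b0 b1].
  rewrite /c /W /Wfun -mulrA; apply: ler_wpM2l; first exact: ltW.
  apply: (@low1 _ mu G (Bfun beta (t * b)) (t * b) t b) => //.
  - by rewrite mulr_ge0 // ltW.
  - by rewrite ler_piMr // ltW.
  - by apply: KBx; rewrite mulr_ge0 // ltW.
set Rp := Rintegral lebesgue_measure `[0%R, 1%R] (fun b => (1 + t * b) `^ (- mu - 1)).
have ipow := @int_pow R t (- mu - 1) t0.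
have ipow' : lebesgue_measure.-integrable `[0%R, 1%R[
    (EFin \o (fun b => (1 + t * b) `^ (- mu - 1))).
  by apply: (@integrableS _ _ _ lebesgue_measure `[0%R, 1%R]) => //.
have RpE : Rp = (1 - (1 + t) `^ (- mu)) / (mu * t) by exact: Rint_pow.
have Rp0 : 0 <= Rp by apply: Rintegral_ge0 => b _; exact: powR_ge0.
set K := 2 * C tau * expR G.
set U := fun b => K * (1 + t * b) `^ (- mu - 1) + 2 / t * W b.
have iU : lebesgue_measure.-integrable `[0%R, 1%R[ (EFin \o U).
  have h : lebesgue_measure.-integrable `[0%R, 1%R[
     ((EFin \o (fun b => (K * (1 + t * b) `^ (- mu - 1))%R)) \+
      (EFin \o (fun b => (2 / t * W b)%R)))%E.
    by apply: integrableD => //; apply: intZ.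
  by apply: eq_integrable h => // b _; rewrite /U /= EFinD.
have RU : Rintegral lebesgue_measure `[0%R, 1%R[ U = K * Rp + 2 / t.
  rewrite /U RintegralD //; try by apply: intZ.
  rewrite RintegralZl // RintegralZl // hn mulr1.
  by rewrite Rintegral_itv_bndo_bndc.
have WpU : Rintegral lebesgue_measure `[0%R, 1%R[ Wp <= K * Rp + 2 / t.
  rewrite -RU; apply: le_Rintegral => // b; rewrite /= in_itv /= => /andP[b0 b1].
  have [hp hp1] := phi1 b b0.
  have K0' : 0 <= K by rewrite /K !mulr_ge0 // ?(ltW Cp) // ltW // expR_gt0.
  have tb0 : 0 <= t * b by rewrite mulr_ge0 // ltW.
  rewrite /U /Wp.
  have [bh|bh] := leP b (2^-1).
  - have u1 := @up1 R mu G (Bfun beta (t * b)) (t * b) b hmu0 hmu1 tb0 b0 bh (KBx _ tb0).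
    have W2 : 0 <= 2 / t * W b by rewrite mulr_ge0 // divr_ge0 // ltW.
    suff : W b * (1 + t * b)^-1 <= K * (1 + t * b) `^ (- mu - 1) by lra.
    rewrite /W /Wfun /K -!mulrA.
    rewrite [X in _ <= X](_ : _ = C tau * (2 * (expR G * (1 + t * b) `^ (- mu - 1))));
      last by ring.
    apply: ler_wpM2l; first exact: ltW.
    by move: u1; rewrite -!mulrA.
  - have P0 : 0 <= K * (1 + t * b) `^ (- mu - 1) by rewrite mulr_ge0 // powR_ge0.
    suff : W b * (1 + t * b)^-1 <= 2 / t * W b by lra.
    rewrite mulrC; apply: ler_wpM2r; first exact: W0.
    apply: inv_le2 => //; nra.
have IWp : `|Rintegral lebesgue_measure `[0%R, 1%R[ I| <=
    Rintegral lebesgue_measure `[0%R, 1%R[ Wp.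
  apply: le_trans (le_normr_Rintegral _ iI) _ => //.
  rewrite le_eqVlt; apply/orP; left; apply/eqP.
  apply: eq_Rintegral => b; rewrite inE /= in_itv /= => /andP[b0 _].
  by rewrite IE // normrN ger0_norm // Wp0.
rewrite normrM gtr0_norm //.
apply: le_trans (@fin_arith R mu G (C tau) tau Rp
  (Rintegral lebesgue_measure `[0%R, 1%R[ Wp) hmu0 hmu1 tau0 G0 Cp hC Rp0 _ _).
- by apply: ler_wpM2l; [exact: ltW | exact: IWp].
- by rewrite RpE.
- by rewrite -/t -/K.
Qed.
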